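(* $\mathtt{RealTime_{CA}}\subseteq\mathtt{pred}$-$\mathtt{ESO}$-$\mathtt{HORN}$: for every cellular automaton $\mathcal A$ with parallel input, neighborhood $\{-1,0,1\}$ and first cell as output cell, there is a predecessor Horn formula $\Phi$ such that for all $w\in\Sigma^+$, $\mathcal A$ accepts $w$ in real time if and only if $\langle w\rangle\models\Phi$.
   Context: Fix a finite alphabet $\Sigma$. A nonempty word $w=w_1\cdots w_n$ is represented by the structure $\langle w\rangle=([1,n];(Q_s)_{s\in\Sigma},\mathtt{min},\mathtt{max},\mathtt{suc},\mathtt{pred})$ with $Q_s(i)\iff w_i=s$, $\mathtt{min}(i)\iff i=1$, $\mathtt{max}(i)\iff i=n$, $\mathtt{suc}(i)=\min(i+1,n)$, $\mathtt{pred}(i)=\max(i-1,1)$; $x-k$ denotes $\mathtt{pred}^k(x)$. A predecessor Horn formula is $\Phi=\exists\mathbf{R}\forall x\forall y\,\psi(x,y)$, $\mathbf{R}$ a finite set of binary relation symbols, $\psi$ a conjunction of Horn clauses in $x,y$, each of the form $\delta_1\wedge\cdots\wedge\delta_r\to\delta_0$ with $\delta_0$ an atom $R(x,y)$ ($R\in\mathbf{R}$) or $\bot$, each hypothesis being one of: $Q_s(x-a)$, $Q_s(y-a)$ ($s\in\Sigma$, $a\ge0$); $U(x-a)$, $\neg U(x-a)$, $U(y-a)$, $\neg U(y-a)$ ($U\in\{\mathtt{min},\mathtt{max}\}$, $a\ge0$); $S(x-a,y-b)$ or $S(y-b,x-a)$ ($S\in\mathbf{R}$, $a,b\ge0$).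 $\mathtt{pred}$-$\mathtt{ESO}$-$\mathtt{HORN}$ is the class of languages $\{w\in\Sigma^+:\langle w\rangle\models\Phi\}$. A cellular automaton is $(Q,\Sigma,Q_{accept},\mathcal N,\delta)$ with finite $Q\supseteq\Sigma$, $Q_{accept}\subseteq Q$, finite ordered neighborhood $\mathcal N\subseteq\mathbb Z$, $\delta:Q^{|\mathcal N|}\to Q$. On input $w$ of length $n$ it uses cells $1,\dots,n$, cells outside being permanently in a state $\sharp$; with parallel input $\langle c,1\rangle=w_c$ and $\langle c,t\rangle=\delta(\langle c+v,t-1\rangle:v\in\mathcal N)$ for $t>1$. With $\mathcal N=\{-1,0,1\}$ and output cell $1$, $\mathcal A$ accepts $w$ in real time iff $\langle 1,n\rangle\in Q_{accept}$; $\mathtt{RealTime_{CA}}$ is the class of languages so accepted. *)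

(* Defs.v *)
From Stdlib Require List.
From mathcomp Require Import all_boot.
Set Implicit Arguments. Unset Strict Implicit. Unset Printing Implicit Defensive.

(* Words.  w = w_1 ... w_n is a [seq Sigma] of size n; the domain of    *)
(* the structure <w> is the set of naturals 1..n, and                   *)
(*   letter w i = Some w_i  for 1 <= i <= n  (None otherwise).          *)

Definition letter (Sigma : Type) (w : seq Sigma) (i : nat) : option Sigma :=
  if 0 < i then nth None (map Some w) i.-1 else None.

Definition predk (a i : nat) : nat := maxn (i - a) 1.

(* Relation symbols are named by naturals (a formula, being a finite    *)
(* list of finite clauses, only mentions finitely many of them).        *)

Inductive fovar := VX | VY.
Inductive unpred := UMin | UMax.

Inductive hyp (Sigma : Type) :=
  | HQ   of Sigma & fovar & nat         (* Q_s(v - a) *)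
  | HU   of unpred & bool & fovar & nat (* U(v - a) if true, ~U(v - a) if false *)
  | HRxy of nat & nat & nat             (* S(x - a, y - b) : HRxy S a b *)
  | HRyx of nat & nat & nat.            (* S(y - b, x - a) : HRyx S a b *)

(* A Horn clause  d_1 /\ ... /\ d_r -> d_0 ;
   conclusion Some R means R(x,y), None means bottom. *)
Record clause (Sigma : Type) := Clause {
  c_hyps : seq (hyp Sigma);
  c_concl : option nat }.

(* Phi = exists R, forall x forall y, psi(x,y), psi = conjunction of clauses *)
Definition horn_formula (Sigma : Type) := seq (clause Sigma).

Section Semantics.
Variable Sigma : eqType.
Variable w : seq Sigma.
(* interpretation of the relation symbols: binary relations on [1,n] *)
Variable I : nat -> nat -> nat -> Prop.
Variables x y : nat.

Definition val_var (v : fovar) : nat := match v with VX => x | VY => y end.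

Definition unpred_holds (U : unpred) (i : nat) : Prop :=
  match U with UMin => i = 1 | UMax => i = size w end.

Definition hyp_holds (h : hyp Sigma) : Prop :=
  match h with
  | HQ s v a => letter w (predk a (val_var v)) = Some s
  | HU U true v a => unpred_holds U (predk a (val_var v))
  | HU U false v a => ~ unpred_holds U (predk a (val_var v))
  | HRxy R a b => I R (predk a x) (predk b y)
  | HRyx R a b => I R (predk b y) (predk a x)
  end.

Definition clause_holds (c : clause Sigma) : Prop :=
  (forall h, List.In h (c_hyps c) -> hyp_holds h) ->
  match c_concl c with Some R => I R x y | None => False end.
End Semantics.

Definition models (Sigma : eqType) (w : seq Sigma) (Phi : horn_formula Sigma) : Prop :=
  exists I : nat -> nat -> nat -> Prop,
    forall x y, 1 <= x <= size w -> 1 <= y <= size w ->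
      forall c, List.In c Phi -> clause_holds w I x y c.

(* Cellular automata with neighbourhood (-1, 0, 1), parallel input,     *)
(* output cell 1.  Q is a finite state set, Sigma is embedded in Q via  *)
(* [ca_in], [ca_sharp] is the permanent state of the cells outside      *)
(* [1,n] (we allow it to be any state of Q; taking Q to contain the     *)
(* boundary symbol is the usual convention and is no loss).             *)

Record CA (Sigma : Type) := MkCA {
  ca_Q : finType;
  ca_in : Sigma -> ca_Q;
  ca_sharp : ca_Q;
  ca_accept : pred ca_Q;
  ca_delta : ca_Q -> ca_Q -> ca_Q -> ca_Q }.

Section CARun.
Variables (Sigma : Type) (A : CA Sigma) (w : seq Sigma).
Let Q : finType := ca_Q A.
Let qin : Sigma -> Q := @ca_in Sigma A. Let qsharp : Q := @ca_sharp Sigma A.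
Let qacc : pred Q := @ca_accept Sigma A. Let qdelta : Q -> Q -> Q -> Q := @ca_delta Sigma A.

(* ca_state t c = <c, t+1>  (time shifted by one: t = 0 is time 1) *)
Fixpoint ca_state (t c : nat) : Q :=
  if 1 <= c <= size w then
    match t with
    | 0 => match letter w c with Some s => qin s | None => qsharp end
    | t'.+1 => qdelta (ca_state t' c.-1) (ca_state t' c) (ca_state t' c.+1)
    end
  else qsharp.

Definition ca_accepts_rt : Prop := qacc (ca_state (size w).-1 1).
End CARun.

(* Main.v *)
Require Import Defs.
From mathcomp Require Import all_boot.
From mathcomp Require Import zify.
From Stdlib Require List.
Set Implicit Arguments. Unset Strict Implicit. Unset Printing Implicit Defensive.

Lemma mem_In (T : eqType) (x : T) (s : seq T) : x \in s -> List.In x s.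
Proof.
elim: s => [//|a s IH]; rewrite in_cons => /orP [/eqP ->|H]; [by left|by right; apply: IH].
Qed.

Section Constr.
Variables (Sigma : finType) (A : CA Sigma).
Local Notation Q := (ca_Q A).
Local Notation qd := (@ca_delta Sigma A).
Local Notation qs := (@ca_sharp Sigma A).
Local Notation qi := (@ca_in Sigma A).
Local Notation qa := (@ca_accept Sigma A).

Definition rq (q : Q) : nat := (nat_of_ord (enum_rank q)).+2.

Lemma rq_inj a b : rq a = rq b -> a = b.
Proof. by move=> [] /ord_inj /enum_rank_inj. Qed.

Definition mn (b : bool) (v : fovar) : hyp Sigma := HU Sigma UMin b v 0.
Definition mx (v : fovar) : hyp Sigma := HU Sigma UMax true v 0.
Definition rr (r a b : nat) : hyp Sigma := HRxy Sigma r a b.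

Definition cD1 : clause Sigma := Clause [:: mn true VX; mn true VY] (Some 0).
Definition cD2 : clause Sigma := Clause [:: rr 0 1 1; mn false VX; mn false VY] (Some 0).
Definition cG1 : clause Sigma := Clause [:: mn true VY; mn false VX] (Some 1).
Definition cG2 : clause Sigma := Clause [:: rr 1 1 1; mn false VX; mn false VY] (Some 1).
Definition cBase (s : Sigma) : clause Sigma :=
  Clause [:: mn true VY; HQ s VX 0] (Some (rq (qi s))).
Definition cDiag (b c : Q) : clause Sigma :=
  Clause [:: mn false VY; rr 0 0 0; rr (rq b) 1 1; rr (rq c) 0 1] (Some (rq (qd qs b c))).
Definition cStep (a b c : Q) : clause Sigma :=
  Clause [:: mn false VY; rr 1 0 0; rr (rq a) 2 1; rr (rq b) 1 1; rr (rq c) 0 1]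
    (Some (rq (qd a b c))).
Definition cRej (q : Q) : clause Sigma :=
  Clause [:: mx VX; mx VY; rr (rq q) 0 0] None.

Definition Phi : horn_formula Sigma :=
  cD1 :: cD2 :: cG1 :: cG2 ::
  (List.map cBase (enum Sigma) ++
   List.flat_map (fun b => List.map (cDiag b) (enum Q)) (enum Q) ++
   List.flat_map (fun a => List.flat_map (fun b => List.map (cStep a b) (enum Q)) (enum Q)) (enum Q) ++
   List.map cRej (List.filter (fun q => ~~ qa q) (enum Q)))%list.

Lemma inE' (T : finType) (x : T) : List.In x (enum T).
Proof. by apply: mem_In; rewrite mem_enum. Qed.

Lemma In_base s : List.In (cBase s) Phi.
Proof.
do 4 right; apply: List.in_or_app; left; apply: List.in_map; exact: inE'.
Qed.
Lemma In_diag b c : List.In (cDiag b c) Phi.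
Proof.
do 4 right; apply: List.in_or_app; right; apply: List.in_or_app; left.
apply/List.in_flat_map; exists b; split; first exact: inE'.
apply: List.in_map; exact: inE'.
Qed.
Lemma In_step a b c : List.In (cStep a b c) Phi.
Proof.
do 4 right; apply: List.in_or_app; right; apply: List.in_or_app; right.
apply: List.in_or_app; left.
apply/List.in_flat_map; exists a; split; first exact: inE'.
apply/List.in_flat_map; exists b; split; first exact: inE'.
apply: List.in_map; exact: inE'.
Qed.
Lemma In_rej q : ~~ qa q -> List.In (cRej q) Phi.
Proof.
move=> Hq.
do 4 right; apply: List.in_or_app; right; apply: List.in_or_app; right.
apply: List.in_or_app; right.
apply: List.in_map; apply/List.filter_In; split => //; exact: inE'.
Qed.

Variable w : seq Sigma.

Definition sv (x y : nat) : Q := ca_state A w (y - 1) (x + 1 - y).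

Lemma cs_out t c : ~~ (1 <= c <= size w) -> ca_state A w t c = qs.
Proof. by move=> H; case: t => [|t] /=; rewrite (negbTE H). Qed.

Lemma cs_S t c : 1 <= c <= size w ->
  ca_state A w t.+1 c = qd (ca_state A w t c.-1) (ca_state A w t c) (ca_state A w t c.+1).
Proof. by move=> H /=; rewrite H. Qed.

Lemma sv_base x s : 1 <= x <= size w -> letter w x = Some s -> sv x 1 = qi s.
Proof.
move=> H Hl; rewrite /sv subnn addnK /= H Hl //.
Qed.

Lemma sv_diag x : 2 <= x <= size w ->
  sv x x = qd qs (sv (x - 1) (x - 1)) (sv x (x - 1)).
Proof.
move=> H.
have E0 : sv x x = ca_state A w (x - 2).+1 1 by rewrite /sv; congr ca_state; lia.
have E1 : sv (x - 1) (x - 1) = ca_state A w (x - 2) 1 by rewrite /sv; congr ca_state; lia.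
have E2 : sv x (x - 1) = ca_state A w (x - 2) 2 by rewrite /sv; congr ca_state; lia.
rewrite E0 E1 E2 cs_S; last by lia.
by rewrite cs_out.
Qed.

Lemma sv_step x y : 2 <= y -> y < x -> x <= size w ->
  sv x y = qd (sv (x - 2) (y - 1)) (sv (x - 1) (y - 1)) (sv x (y - 1)).
Proof.
move=> H1 H2 H3.
have E0 : sv x y = ca_state A w (y - 2).+1 (x + 1 - y) by rewrite /sv; congr ca_state; lia.
have E1 : sv (x - 2) (y - 1) = ca_state A w (y - 2) (x + 1 - y).-1 by rewrite /sv; congr ca_state; lia.
have E2 : sv (x - 1) (y - 1) = ca_state A w (y - 2) (x + 1 - y) by rewrite /sv; congr ca_state; lia.
have E3 : sv x (y - 1) = ca_state A w (y - 2) (x + 1 - y).+1 by rewrite /sv; congr ca_state; lia.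
rewrite E0 E1 E2 E3 cs_S //; lia.
Qed.

Definition Iint (r x y : nat) : Prop :=
  match r with 0 => x = y | 1 => y < x | _ => r = rq (sv x y) end.


Lemma hcons (T : Type) (P : T -> Prop) (a : T) (R : T -> Prop) :
  (forall h, a = h \/ R h -> P h) -> P a /\ (forall h, R h -> P h).
Proof. move=> H; split; [apply: H; by left | move=> h Hh; apply: H; by right]. Qed.

Ltac split_hyps H :=
  lazymatch type of H with
  | forall h, _ = h \/ _ -> _ =>
      let Ha := fresh "Hh" in
      let H' := fresh "H" in
      have [Ha H'] := @hcons _ _ _ _ H; clear H; split_hyps H'
  | _ => clear H
  end.

Lemma pk0 x : 1 <= x -> predk 0 x = x.
Proof. rewrite /predk; lia. Qed.

Lemma sound x y : 1 <= x <= size w -> 1 <= y <= size w ->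
  qa (sv (size w) (size w)) ->
  forall c, List.In c Phi -> clause_holds w Iint x y c.
Proof.
move=> Hx Hy Hacc c Hc.
have Hx1 : 1 <= x by lia. have Hy1 : 1 <= y by lia.
move: Hc => /= [<-|[<-|[<-|[<-|]]]].
- rewrite /clause_holds /= => H; split_hyps H; rewrite /= /predk in Hh Hh0 *; lia.
- rewrite /clause_holds /= => H; split_hyps H; rewrite /= /predk in Hh Hh0 Hh1 *; lia.
- rewrite /clause_holds /= => H; split_hyps H; rewrite /= /predk in Hh Hh0 *; lia.
- rewrite /clause_holds /= => H; split_hyps H; rewrite /= /predk in Hh Hh0 Hh1 *; lia.
move/List.in_app_iff => [/List.in_map_iff [s [<- _]]|].
  rewrite /clause_holds /= => H; split_hyps H; rewrite /= ?(pk0 Hx1) ?(pk0 Hy1) in Hh Hh0 *.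
  have -> : y = 1 by move: Hh; rewrite /predk; lia.
  by rewrite (sv_base Hx Hh0).
move/List.in_app_iff => [/List.in_flat_map [b [_ /List.in_map_iff [c' [<- _]]]]|].
  rewrite /clause_holds /= => H; split_hyps H; rewrite /= ?(pk0 Hx1) ?(pk0 Hy1) in Hh Hh0 Hh1 Hh2 *.
  rewrite /Iint /rq in Hh1 Hh2 *.
  case: Hh1 => /ord_inj /enum_rank_inj ->; case: Hh2 => /ord_inj /enum_rank_inj ->.
  rewrite Hh0 (@sv_diag y); last by lia.
  by rewrite /predk; congr ((enum_rank (qd _ (sv _ _) (sv _ _))).+2); lia.
move/List.in_app_iff => [/List.in_flat_map [a [_ /List.in_flat_map [b [_ /List.in_map_iff [c' [<- _]]]]]]|].
  rewrite /clause_holds /= => H; split_hyps H; rewrite /= ?(pk0 Hx1) ?(pk0 Hy1) in Hh Hh0 Hh1 Hh2 Hh3 *.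
  rewrite /Iint /rq in Hh1 Hh2 Hh3 *.
  case: Hh1 => /ord_inj /enum_rank_inj ->; case: Hh2 => /ord_inj /enum_rank_inj ->.
  case: Hh3 => /ord_inj /enum_rank_inj ->.
  rewrite (@sv_step x y); try lia.
  have -> : predk 2 x = x - 2 by rewrite /predk; lia.
  have -> : predk 1 x = x - 1 by rewrite /predk; lia.
  have -> : predk 1 y = y - 1 by rewrite /predk; lia.
  by [].
move/List.in_map_iff => [q [<- /List.filter_In [_ Hq]]].
rewrite /clause_holds /= => H; split_hyps H; rewrite /= ?(pk0 Hx1) ?(pk0 Hy1) in Hh Hh0 Hh1 *.
rewrite /Iint /rq in Hh1.
case: Hh1 => /ord_inj /enum_rank_inj Eq; subst q x y.
by rewrite Hacc in Hq.
Qed.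


Lemma hcons_intro (T : Type) (P : T -> Prop) (a : T) (R : T -> Prop) :
  P a -> (forall h, R h -> P h) -> forall h, a = h \/ R h -> P h.
Proof. by move=> Ha HR h [<-|/HR]. Qed.

Ltac allh :=
  lazymatch goal with
  | |- forall h, _ = h \/ _ -> _ => apply: hcons_intro; [ | allh]
  | |- forall h, False -> _ => by move=> ? []
  end.

Lemma sv_nn : sv (size w) (size w) = ca_state A w (size w).-1 1.
Proof. rewrite /sv; congr ca_state; lia. Qed.

Lemma letter_some x : 1 <= x <= size w -> exists s, letter w x = Some s.
Proof.
case: w => [|s0 w'] /= H; first lia.
exists (nth s0 (s0 :: w') x.-1); rewrite /letter.
have -> : 0 < x by lia.
by rewrite (nth_map s0) //=; lia.
Qed.

Lemma pk1 x : 1 <= x -> predk 1 x.+1 = x.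
Proof. rewrite /predk; lia. Qed.

Section Compl.
Variable I : nat -> nat -> nat -> Prop.
Hypothesis HI : forall x y, 1 <= x <= size w -> 1 <= y <= size w ->
  forall c, List.In c Phi -> clause_holds w I x y c.

Lemma compD y : 1 <= y <= size w -> I 0 y y.
Proof.
elim: y => [|y IH] Hy; first lia.
case: (posnP y) => [->|Hy0].
  have := HI (x:=1) (y:=1) _ _ (c:=cD1) _; rewrite /clause_holds /=; apply; try lia.
  - by left.
  - allh; rewrite /= /predk //.
have := HI (x:=y.+1) (y:=y.+1) _ _ (c:=cD2) _; rewrite /clause_holds /=; apply; try lia.
- by right; left.
- allh; rewrite /= ?pk1 //; try (rewrite /predk; lia).
  apply: IH; lia.
Qed.

Lemma compG y x : 1 <= y -> y < x -> x <= size w -> I 1 x y.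
Proof.
elim: y x => [|y IH] x Hy Hyx Hx; first lia.
case: (posnP y) => [Hy0|Hy0].
  subst y.
  have := HI (x:=x) (y:=1) _ _ (c:=cG1) _; rewrite /clause_holds /=; apply; try lia.
  - by right; right; left.
  - allh; rewrite /= /predk //; lia.
have := HI (x:=x) (y:=y.+1) _ _ (c:=cG2) _; rewrite /clause_holds /=; apply; try lia.
- by right; right; right; left.
- allh; rewrite /= ?pk1 //; try (rewrite /predk; lia).
  have -> : predk 1 x = x - 1 by rewrite /predk; lia.
  apply: IH; lia.
Qed.

Lemma compR y x : 1 <= y -> y <= x -> x <= size w -> I (rq (sv x y)) x y.
Proof.
elim: y x => [|y IH] x Hy Hyx Hx; first lia.
case: (posnP y) => [Hy0|Hy0].
  subst y.
  have [s Hs] := letter_some (x:=x) ltac:(lia).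
  rewrite (sv_base (x:=x) ltac:(lia) Hs).
  have := HI (x:=x) (y:=1) _ _ (In_base s); rewrite /clause_holds /=; apply; try lia.
  allh; rewrite /= ?pk0 //; try lia.
have Ey : predk 1 y.+1 = y by apply: pk1.
case: (ltngtP y.+1 x) => Hc; last first.
- subst x.
  rewrite (@sv_diag y.+1); last lia.
  have := HI (x:=y.+1) (y:=y.+1) _ _ (In_diag (sv y y) (sv y.+1 y)); rewrite /clause_holds /=.
  have -> : y.+1 - 1 = y by lia.
  apply; try lia.
  allh; rewrite /= ?pk0 ?Ey //; try lia.
  + apply: compD; lia.
  + apply: IH; lia.
  + apply: IH; lia.
- lia.
- rewrite (@sv_step x y.+1); try lia.
  have -> : y.+1 - 1 = y by lia.
  have := HI (x:=x) (y:=y.+1) _ _ (In_step (sv (x - 2) y) (sv (x - 1) y) (sv x y)); rewrite /clause_holds /=.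
  apply; try lia.
  have E1 : predk 1 x = x - 1 by rewrite /predk; lia.
  have E2 : predk 2 x = x - 2 by rewrite /predk; lia.
  allh; rewrite /= ?pk0 ?Ey ?E1 ?E2 //; try lia.
  + apply: compG; lia.
  + apply: IH; lia.
  + apply: IH; lia.
  + apply: IH; lia.
Qed.

Lemma complete : 0 < size w -> ca_accept (sv (size w) (size w)).
Proof.
move=> Hn.
case Hq: (ca_accept _) => //.
have := HI (x:=size w) (y:=size w) _ _ (In_rej (q:=sv (size w) (size w)) ltac:(by rewrite Hq)).
move=> H; have := H ltac:(lia) ltac:(lia); rewrite /clause_holds /= => H'; exfalso; apply: H'.
allh; rewrite /= ?pk0 //; try lia.
apply: compR; lia.
Qed.
End Compl.

End Constr.

Theorem lemma3 (Sigma : finType) (A : CA Sigma) :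
  exists Phi : horn_formula Sigma,
    forall w : seq Sigma, 0 < size w ->
      (ca_accepts_rt A w <-> models w Phi).
Proof.
exists (Phi A) => w Hw; rewrite /ca_accepts_rt -sv_nn; split.
- move=> Hacc; exists (Iint A w) => x y Hx Hy c Hc; exact: sound.
- move=> [I HI]; exact: complete HI Hw.
Qed.
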